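(* Let $\{A,B\}\cup\{C_\alpha:\alpha<\omega_1\}$ be a partition of $\omega_1$ with $|A|=|B|=\omega_1$ and $|C_\alpha|=\omega$ for all $\alpha<\omega_1$. Let $\mathbb X=\langle\omega_1,\rho\rangle$ and $\mathbb Y=\langle\omega_1,\sigma\rangle$ where $\rho$ is the equivalence relation whose classes are $A\cup B$ and the $C_\alpha$ ($\alpha<\omega_1$), and $\sigma$ the one whose classes are $A$, $B$ and the $C_\alpha$ ($\alpha<\omega_1$). Then $\mathbb X\sim_c\mathbb Y$, $\mathbb X\equiv_{\infty\omega}\mathbb Y$, and $\mathbb X\not\cong\mathbb Y$.
   Context: A condensation from $\langle X,\rho\rangle$ onto $\langle Y,\sigma\rangle$ is a bijection $F:X\to Y$ with $x\,\rho\,x'\Rightarrow F(x)\,\sigma\,F(x')$; $\mathbb X\sim_c\mathbb Y$ means condensations exist in both directions. $\mathbb X\equiv_{\infty\omega}\mathbb Y$ means $\mathbb X$ and $\mathbb Y$ satisfy the same sentences of the infinitary logic $L_{\infty\omega}$ (language with one binary relation symbol). *)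

(* Defs.v *)
From Stdlib Require Import PeanoNat.

Definition equinumerous (X Y : Type) : Prop :=
  exists (f : X -> Y) (g : Y -> X),
    (forall x, g (f x) = x) /\ (forall y, f (g y) = y).

Definition countable (X : Type) : Prop :=
  exists f : X -> nat, forall x y, f x = f y -> x = y.

(** [W] with the strict relation [lt] is (order-isomorphic to) the ordinal
    omega_1: a well-founded strict total order which is uncountable but all of
    whose proper initial segments are countable.  This characterises omega_1
    up to order isomorphism. *)
Record is_omega1 (W : Set) (lt : W -> W -> Prop) : Prop := {
  o1_irrefl : forall x, ~ lt x x;
  o1_trans : forall x y z, lt x y -> lt y z -> lt x z;
  o1_total : forall x y, lt x y \/ x = y \/ lt y x;
  o1_wf : well_founded lt;
  o1_uncountable : ~ countable W;
  o1_segments : forall x, countable {y : W | lt y x}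
}.

Definition condensation {X Y : Type} (rho : X -> X -> Prop)
  (sigma : Y -> Y -> Prop) (F : X -> Y) : Prop :=
  (exists G : Y -> X, (forall x, G (F x) = x) /\ (forall y, F (G y) = y)) /\
  (forall x x', rho x x' -> sigma (F x) (F x')).

Definition condenses {X Y : Type} (rho : X -> X -> Prop)
  (sigma : Y -> Y -> Prop) : Prop :=
  exists F : X -> Y, condensation rho sigma F.

Definition bi_condensable {X Y : Type} (rho : X -> X -> Prop)
  (sigma : Y -> Y -> Prop) : Prop :=
  condenses rho sigma /\ condenses sigma rho.

Definition isomorphic {X Y : Type} (rho : X -> X -> Prop)
  (sigma : Y -> Y -> Prop) : Prop :=
  exists (F : X -> Y) (G : Y -> X),
    (forall x, G (F x) = x) /\ (forall y, F (G y) = y) /\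
    (forall x x', rho x x' <-> sigma (F x) (F x')).

(** Variables are natural numbers; conjunctions range over arbitrary
    index types (sets); quantification is finitary (one variable at a time).
    Formulas with no free variables (sentences) automatically have only
    finitely many free variables in each subformula, as in L_{oo omega}. *)
Inductive formula : Type :=
| FEq  : nat -> nat -> formula
| FRel : nat -> nat -> formula
| FNot : formula -> formula
| FConj : forall I : Type, (I -> formula) -> formula
| FEx  : nat -> formula -> formula.

Inductive free (n : nat) : formula -> Prop :=
| free_eq_l : forall b, free n (FEq n b)
| free_eq_r : forall a, free n (FEq a n)
| free_rel_l : forall b, free n (FRel n b)
| free_rel_r : forall a, free n (FRel a n)
| free_not : forall f, free n f -> free n (FNot f)
| free_conj : forall I (g : I -> formula) i, free n (g i) -> free n (FConj I g)
| free_ex : forall m f, n <> m -> free n f -> free n (FEx m f).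

Definition sentence (f : formula) : Prop := forall n, ~ free n f.

Definition update {M : Type} (e : nat -> M) (m : nat) (x : M) : nat -> M :=
  fun k => if Nat.eqb k m then x else e k.

Fixpoint sat {M : Type} (R : M -> M -> Prop) (f : formula) (e : nat -> M)
  : Prop :=
  match f with
  | FEq a b => e a = e b
  | FRel a b => R (e a) (e b)
  | FNot g => ~ sat R g e
  | FConj J g => forall i : J, sat R (g i) e
  | FEx m g => exists x : M, sat R g (update e m x)
  end.

Definition Linf_equiv {X Y : Type} (rho : X -> X -> Prop)
  (sigma : Y -> Y -> Prop) : Prop :=
  forall phi, sentence phi ->
    ((forall e : nat -> X, sat rho phi e) <-> (forall e : nat -> Y, sat sigma phi e)).

(* Main.v *)
Require Import Defs.
From Stdlib Require Import Classical ClassicalEpsilon ProofIrrelevance List Lia PeanoNat.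
Import ListNotations.

Lemma proj_inj {T : Type} (P : T -> Prop) (s t : sig P) : proj1_sig s = proj1_sig t -> s = t.
Proof. destruct s as [x hx], t as [y hy]; simpl; intros ->. f_equal. apply proof_irrelevance. Qed.

Lemma inj_surj_bij {X Y : Type} (f : X -> Y) :
  (forall x y, f x = f y -> x = y) -> (forall y, exists x, f x = y) ->
  exists g : Y -> X, (forall x, g (f x) = x) /\ (forall y, f (g y) = y).
Proof.
  intros Hi Hs.
  exists (fun y => proj1_sig (constructive_indefinite_description _ (Hs y))).
  split.
  - intros x. apply Hi. exact (proj2_sig (constructive_indefinite_description _ (Hs (f x)))).
  - intros y. exact (proj2_sig (constructive_indefinite_description _ (Hs y))).
Qed.

Lemma SB {X Y : Type} (f : X -> Y) (g : Y -> X) :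
  (forall x x', f x = f x' -> x = x') -> (forall y y', g y = g y' -> y = y') ->
  equinumerous X Y.
Proof.
  intros Hf Hg.
  set (D := fun x : X => exists n x0, (~ exists y, g y = x0) /\ x = Nat.iter n (fun z => g (f z)) x0).
  assert (HDnot : forall x, ~ D x -> exists y, g y = x).
  { intros x Hx. apply NNPP. intro Hn. apply Hx. exists 0, x. split; auto. }
  assert (HDf : forall x, D x -> D (g (f x))).
  { intros x [n [x0 [H1 H2]]]. exists (S n), x0. split; auto. simpl. rewrite <- H2. reflexivity. }
  assert (HDg : forall y, D (g y) -> exists z, D z /\ f z = y).
  { intros y [n [x0 [H1 H2]]]. destruct n as [|n].
    - simpl in H2. exfalso. apply H1. exists y. auto.
    - simpl in H2. apply Hg in H2. exists (Nat.iter n (fun z => g (f z)) x0).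
      split; [exists n, x0; auto | auto]. }
  set (h := fun x => match excluded_middle_informative (D x) with
             | left _ => f x
             | right Hn => proj1_sig (constructive_indefinite_description _ (HDnot x Hn)) end).
  assert (Hi : forall x x', h x = h x' -> x = x').
  { intros x x'. unfold h.
    destruct (excluded_middle_informative (D x)) as [Dx|Dx];
    destruct (excluded_middle_informative (D x')) as [Dx'|Dx'].
    - apply Hf.
    - destruct (constructive_indefinite_description _ _) as [y' Hy']; simpl.
      intros E. exfalso. apply Dx'. rewrite <- Hy', <- E. apply HDf; auto.
    - destruct (constructive_indefinite_description _ _) as [y Hy]; simpl.
      intros E. exfalso. apply Dx. rewrite <- Hy, E. apply HDf; auto.
    - destruct (constructive_indefinite_description _ (HDnot x Dx)) as [y Hy]; simpl.
      destruct (constructive_indefinite_description _ (HDnot x' Dx')) as [y' Hy']; simpl.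
      intros ->. congruence. }
  assert (Hs : forall y, exists x, h x = y).
  { intros y. destruct (classic (D (g y))) as [Dg|Dg].
    - destruct (HDg y Dg) as [z [Dz Ez]]. exists z. unfold h.
      destruct (excluded_middle_informative (D z)); [auto | contradiction].
    - exists (g y). unfold h. destruct (excluded_middle_informative (D (g y))); [contradiction|].
      destruct (constructive_indefinite_description _ _) as [y0 Hy0]; simpl. auto. }
  destruct (inj_surj_bij h Hi Hs) as [k [H1 H2]].
  exists h, k. auto.
Qed.

Lemma list_countable {T W : Type} (l : list W) (Q : T -> W -> Prop) :
  (forall t, exists y, In y l /\ Q t y) ->
  (forall t t' y, Q t y -> Q t' y -> t = t') -> countable T.
Proof.
  intros H1 H2.
  assert (H : forall t, exists n, exists y, nth_error l n = Some y /\ Q t y).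
  { intros t. destruct (H1 t) as [y [Hy Hq]]. apply In_nth_error in Hy.
    destruct Hy as [n Hn]. exists n, y. auto. }
  exists (fun t => proj1_sig (constructive_indefinite_description _ (H t))).
  intros t t'.
  destruct (constructive_indefinite_description _ (H t)) as [n [y [Hn Hy]]].
  destruct (constructive_indefinite_description _ (H t')) as [n' [y' [Hn' Hy']]].
  simpl. intros ->. rewrite Hn in Hn'. injection Hn' as ->. eauto.
Qed.

Lemma inj_avoid {W : Type} (h : nat -> W) : (forall n m, h n = h m -> n = m) ->
  forall l, exists n, ~ In (h n) l.
Proof.
  intros Hh l.
  assert (exists N, forall n, N <= n -> ~ In (h n) l) as [N HN].
  { induction l as [|a l [N IH]].
    - exists 0. intros n _ [].
    - destruct (classic (exists k, h k = a)) as [[k Hk]|Hk].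
      + exists (max N (S k)). intros n Hn [E|E].
        * subst a. apply Hh in E. lia.
        * apply (IH n); [lia|auto].
      + exists N. intros n Hn [E|E].
        * apply Hk. eauto.
        * apply (IH n); auto. }
  exists N. apply HN. auto.
Qed.

Definition piso {X Y : Type} (R : X -> X -> Prop) (S : Y -> Y -> Prop) (L : list nat)
  (e : nat -> X) (e' : nat -> Y) : Prop :=
  forall i j, In i L -> In j L -> (e i = e j <-> e' i = e' j) /\ (R (e i) (e j) <-> S (e' i) (e' j)).

Lemma piso_sym {X Y : Type} (R : X -> X -> Prop) (S : Y -> Y -> Prop) L e e' :
  piso R S L e e' -> piso S R L e' e.
Proof. intros H i j Hi Hj. destruct (H i j Hi Hj). split; symmetry; auto. Qed.

Definition goodrel {X : Type} (R : X -> X -> Prop) : Prop :=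
  (forall x, R x x) /\ (forall x y, R x y -> R y x) /\ (forall x y z, R x y -> R y z -> R x z) /\
  (forall l : list X, exists y, forall z, In z l -> ~ R y z) /\
  (forall y (l : list X), exists z, R y z /\ ~ In z l).

Lemma forth {X Y : Type} (R : X -> X -> Prop) (S : Y -> Y -> Prop) :
  goodrel R -> goodrel S -> forall L e e', piso R S L e e' -> forall m x,
  exists x', piso R S (m :: L) (update e m x) (update e' m x').
Proof.
  intros [Rr [Rs [Rt _]]] [Sr [Ss [St [SN SI]]]] L e e' Hp m x.
  assert (Hx : exists x', forall l, In l L ->
     (x = e l <-> x' = e' l) /\ (R x (e l) <-> S x' (e' l))).
  { destruct (classic (exists i, In i L /\ e i = x)) as [[i [Hi Ei]]|N1].
    - exists (e' i). intros l Hl. subst x. apply Hp; auto.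
    - destruct (classic (exists i, In i L /\ R x (e i))) as [[i [Hi Ri]]|N2].
      + destruct (SI (e' i) (map e' L)) as [z [Sz Nz]].
        exists z. intros l Hl. split.
        * split; intros E; exfalso.
          -- apply N1. exists l. auto.
          -- apply Nz. rewrite E. apply in_map. auto.
        * destruct (Hp i l Hi Hl) as [_ [H1 H2]]. split; intros H.
          -- apply St with (e' i); [apply Ss; auto|]. apply H1. apply Rt with x; auto.
          -- apply Rt with (e i); auto. apply H2. apply St with z; auto.
      + destruct (SN (map e' L)) as [y Hy].
        exists y. intros l Hl.
        assert (~ R x (e l)) by (intro; apply N2; eauto).
        assert (~ S y (e' l)) by (apply Hy; apply in_map; auto).
        split; split; intros E; exfalso; try contradiction.
        -- subst. auto.
        -- subst. auto. }
  destruct Hx as [x' Hx]. exists x'.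
  intros i j Hi Hj. unfold update.
  destruct (Nat.eqb_spec i m) as [->|ni]; destruct (Nat.eqb_spec j m) as [->|nj].
  - split; split; auto.
  - destruct Hj as [Hj|Hj]; [congruence|]. apply Hx; auto.
  - destruct Hi as [Hi|Hi]; [congruence|]. destruct (Hx i Hi) as [[H1 H2] [H3 H4]].
    split; split; intros H.
    + symmetry; auto.
    + symmetry; auto.
    + apply Ss, H3, Rs, H.
    + apply Rs, H4, Ss, H.
  - destruct Hi as [Hi|Hi]; [congruence|]. destruct Hj as [Hj|Hj]; [congruence|]. apply Hp; auto.
Qed.

Lemma sat_piso {X Y : Type} (R : X -> X -> Prop) (S : Y -> Y -> Prop) :
  goodrel R -> goodrel S -> forall f L e e', (forall n, free n f -> In n L) ->
  piso R S L e e' -> (sat R f e <-> sat S f e').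
Proof.
  intros GR GS f. induction f as [a b|a b|g IH|I g IH|m g IH]; intros L e e' HL Hp; simpl.
  - apply Hp; apply HL; constructor.
  - apply Hp; apply HL; constructor.
  - rewrite (IH L e e'); [tauto| |auto]. intros n Hn; apply HL; constructor; auto.
  - split; intros H i; specialize (H i); eapply IH; eauto; intros n Hn; apply HL; econstructor; eauto.
  - assert (HL' : forall n, free n g -> In n (m :: L)).
    { intros n Hn. destruct (Nat.eq_dec n m) as [->|ne]; [left; auto|right].
      apply HL. constructor; auto. }
    split.
    + intros [x Hx]. destruct (forth R S GR GS L e e' Hp m x) as [x' Hx'].
      exists x'. eapply IH; eauto.
    + intros [x' Hx']. destruct (forth S R GS GR L e' e (piso_sym _ _ _ _ _ Hp) m x') as [x Hx].
      exists x. eapply IH; eauto. apply piso_sym. auto.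
Qed.

Lemma linf_good {X Y : Type} (R : X -> X -> Prop) (S : Y -> Y -> Prop) :
  goodrel R -> goodrel S -> X -> Y -> Linf_equiv R S.
Proof.
  intros GR GS x0 y0 phi Hphi.
  assert (H : forall e e', sat R phi e <-> sat S phi e').
  { intros e e'. apply (sat_piso R S GR GS phi [] e e').
    - intros n Hn. exfalso. apply (Hphi n Hn).
    - intros i j []. }
  split; intros Hs e.
  - apply (H (fun _ => x0) e). auto.
  - apply (H e (fun _ => y0)). auto.
Qed.

Lemma big_avoid {W : Type} (P : W -> Prop) : ~ countable W -> equinumerous {x | P x} W ->
  forall l, exists z, P z /\ ~ In z l.
Proof.
  intros HW [f [g [H1 H2]]] l. apply NNPP. intros N. apply HW.
  assert (Hc : countable {x | P x}).
  { apply (list_countable l (fun s y => proj1_sig s = y)).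
    - intros [x Hx]. exists x. split; auto. apply NNPP. intro. apply N. eauto.
    - intros s t y <- E. apply proj_inj. auto. }
  destruct Hc as [h Hh]. exists (fun w => h (g w)). intros x y E.
  apply Hh in E. rewrite <- (H2 x), <- (H2 y), E. auto.
Qed.

Lemma nat_avoid {W : Type} (P : W -> Prop) : equinumerous {x | P x} nat ->
  forall l, exists z, P z /\ ~ In z l.
Proof.
  intros [f [g [H1 H2]]] l.
  destruct (inj_avoid (fun n => proj1_sig (g n))) with (l := l) as [n Hn].
  - intros n m E. apply proj_inj in E. rewrite <- (H2 n), <- (H2 m), E. auto.
  - exists (proj1_sig (g n)). split; auto. apply proj2_sig.
Qed.

Lemma class_avoid {W : Type} (C : W -> W -> Prop) : ~ countable W -> (forall a, exists x, C a x) ->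
  (forall x a b, C a x -> C b x -> a = b) ->
  forall l, exists a, forall z, In z l -> ~ C a z.
Proof.
  intros HW Hne HCC l. apply NNPP. intros N. apply HW.
  apply (list_countable l C).
  - intros a. apply NNPP. intros N2. apply N. exists a. intros z Hz Hc. apply N2. eauto.
  - intros t t' y H1 H2. eapply HCC; eauto.
Qed.

Lemma choose_bij {I : Type} (P Q : I -> Type) : (forall i, equinumerous (P i) (Q i)) ->
  exists (f : forall i, P i -> Q i) (g : forall i, Q i -> P i),
    (forall i x, g i (f i x) = x) /\ (forall i y, f i (g i y) = y).
Proof.
  intros H.
  exists (fun i => proj1_sig (constructive_indefinite_description _ (H i))).
  exists (fun i => proj1_sig (constructive_indefinite_description _
     (proj2_sig (constructive_indefinite_description _ (H i))))).
  split; intros i;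
  destruct (constructive_indefinite_description _ (H i)) as [f Hf]; simpl;
  destruct (constructive_indefinite_description _ Hf) as [g Hg]; simpl; apply Hg.
Qed.

Lemma inj_into_small {W : Type} (P Q : W -> Prop) (G : W -> W) : ~ countable W ->
  equinumerous {x | P x} W -> equinumerous {x | Q x} nat ->
  (forall x y, G x = G y -> x = y) -> (forall y, P y -> Q (G y)) -> False.
Proof.
  intros HU [f [g [H1 H2]]] [f' [g' [H1' H2']]] HG HPQ. apply HU.
  exists (fun w => f' (exist _ (G (proj1_sig (g w))) (HPQ _ (proj2_sig (g w))))).
  intros x y E. apply (f_equal g') in E. rewrite !H1' in E.
  apply (f_equal (@proj1_sig _ _)) in E. simpl in E. apply HG in E. apply proj_inj in E.
  rewrite <- (H2 x), <- (H2 y), E. auto.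
Qed.

Theorem mainTheorem11
  (W : Set) (lt : W -> W -> Prop) (HW : is_omega1 W lt)
  (A B : W -> Prop) (C : W -> W -> Prop)
  (Hcover : forall x, A x \/ B x \/ exists a, C a x)
  (HAB : forall x, A x -> B x -> False)
  (HAC : forall x a, A x -> C a x -> False)
  (HBC : forall x a, B x -> C a x -> False)
  (HCC : forall x a b, C a x -> C b x -> a = b)
  (HA : equinumerous {x : W | A x} W)
  (HB : equinumerous {x : W | B x} W)
  (HC : forall a, equinumerous {x : W | C a x} nat) :
  let rho := fun x y : W =>
    ((A x \/ B x) /\ (A y \/ B y)) \/ (exists a, C a x /\ C a y) in
  let sigma := fun x y : W =>
    (A x /\ A y) \/ (B x /\ B y) \/ (exists a, C a x /\ C a y) in
  bi_condensable rho sigma /\ Linf_equiv rho sigma /\ ~ isomorphic rho sigma.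
Proof.
  intros rho sigma.
  pose proof (o1_uncountable _ _ HW) as HU.
  assert (HCne : forall a, exists x, C a x).
  { intros a. destruct (HC a) as [f [g _]]. exists (proj1_sig (g 0)). apply proj2_sig. }
  assert (Aav := big_avoid A HU HA). assert (Bav := big_avoid B HU HB).
  assert (Cav : forall a l, exists z, C a z /\ ~ In z l) by (intro a; apply nat_avoid; auto).
  assert (Cls := class_avoid C HU HCne HCC).
  assert (HN : forall l, exists y, (forall z, In z l -> ~ rho y z) /\ (forall z, In z l -> ~ sigma y z)).
  { intros l. destruct (Cls l) as [a Ha]. destruct (HCne a) as [y Hy]. exists y.
    split; intros z Hz Hr; apply (Ha z Hz); unfold rho, sigma in Hr.
    - destruct Hr as [[[H|H] _]|[b [H1 H2]]]; [exfalso; eapply HAC; eauto | exfalso; eapply HBC; eauto |].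
      rewrite (HCC _ _ _ H1 Hy) in H2; exact H2.
    - destruct Hr as [[H _]|[[H _]|[b [H1 H2]]]]; [exfalso; eapply HAC; eauto | exfalso; eapply HBC; eauto |].
      rewrite (HCC _ _ _ H1 Hy) in H2; exact H2. }
  assert (GR : goodrel rho).
  { unfold goodrel, rho. split; [|split; [|split; [|split]]].
    - intros x. destruct (Hcover x) as [H|[H|[a H]]]; [left; auto|left; auto|right; eauto].
    - intros x y [[H1 H2]|[a [H1 H2]]]; [left|right; exists a]; auto.
    - intros x y z [[Hx Hy]|[a [Hx Hy]]] [[Hy' Hz]|[b [Hy' Hz]]].
      + left; auto.
      + exfalso. destruct Hy; eauto.
      + exfalso. destruct Hy'; eauto.
      + right. exists a. pose proof (HCC _ _ _ Hy Hy'). subst. auto.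
    - intros l. destruct (HN l) as [y [Hy _]]. eauto.
    - intros y l. destruct (Hcover y) as [H|[H|[a H]]].
      + destruct (Aav l) as [z [Hz Nz]]. exists z. split; [left; auto|auto].
      + destruct (Aav l) as [z [Hz Nz]]. exists z. split; [left; auto|auto].
      + destruct (Cav a l) as [z [Hz Nz]]. exists z. split; [right; eauto|auto]. }
  assert (GS : goodrel sigma).
  { unfold goodrel, sigma. split; [|split; [|split; [|split]]].
    - intros x. destruct (Hcover x) as [H|[H|[a H]]]; [left; auto|right; left; auto|right; right; eauto].
    - intros x y [[H1 H2]|[[H1 H2]|[a [H1 H2]]]]; [left|right; left|right; right; exists a]; auto.
    - intros x y z [[Hx Hy]|[[Hx Hy]|[a [Hx Hy]]]] [[Hy' Hz]|[[Hy' Hz]|[b [Hy' Hz]]]];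
        try (exfalso; eauto; fail); try (left; auto; fail); try (right; left; auto; fail).
      right; right. exists a. pose proof (HCC _ _ _ Hy Hy'). subst. auto.
    - intros l. destruct (HN l) as [y [_ Hy]]. eauto.
    - intros y l. destruct (Hcover y) as [H|[H|[a H]]].
      + destruct (Aav l) as [z [Hz Nz]]. exists z. split; [left; auto|auto].
      + destruct (Bav l) as [z [Hz Nz]]. exists z. split; [right; left; auto|auto].
      + destruct (Cav a l) as [z [Hz Nz]]. exists z. split; [right; right; eauto|auto]. }
  destruct (HN []) as [w0 _].
  split; [|split].
  3: {
    intros [F [G [H1 [H2 H3]]]].
    destruct (Aav []) as [a1 [Ha1 _]]. destruct (Bav []) as [b1 [Hb1 _]].
    assert (HGi : forall x y, G x = G y -> x = y).
    { intros x y E. rewrite <- (H2 x), <- (H2 y), E. auto. }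
    assert (Hrel : forall y z, sigma y z -> rho (G y) (G z)).
    { intros y z H. apply H3. rewrite !H2. auto. }
    assert (Np : forall a, C a (G a1) -> False).
    { intros a Ha. apply (inj_into_small A (C a) G HU HA (HC a) HGi).
      intros y Hy. destruct (Hrel a1 y) as [[[H|H] _]|[b [Hb1' Hb2]]].
      - left; auto.
      - exfalso; eauto.
      - exfalso; eauto.
      - rewrite (HCC _ _ _ Ha Hb1'). auto. }
    assert (Nq : forall a, C a (G b1) -> False).
    { intros a Ha. apply (inj_into_small B (C a) G HU HB (HC a) HGi).
      intros y Hy. destruct (Hrel b1 y) as [[[H|H] _]|[b [Hb1' Hb2]]].
      - right; left; auto.
      - exfalso; eauto.
      - exfalso; eauto.
      - rewrite (HCC _ _ _ Ha Hb1'). auto. }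
    assert (Hpq : rho (G a1) (G b1)).
    { left. split.
      - destruct (Hcover (G a1)) as [H|[H|[a H]]]; auto. exfalso; eauto.
      - destruct (Hcover (G b1)) as [H|[H|[a H]]]; auto. exfalso; eauto. }
    apply H3 in Hpq. rewrite !H2 in Hpq.
    destruct Hpq as [[_ H]|[[H _]|[a [H _]]]]; eauto. }
  2: { apply linf_good; auto. }
  split.
  2: { exists (fun x => x). split.
       - exists (fun x => x). auto.
       - intros x y [[H1 H2]|[[H1 H2]|H]]; [left; auto|left; auto|right; auto]. }
  clear GR GS HN.
  destruct HA as [fa [ga [Ha1 Ha2]]]. destruct HB as [fb [gb [Hb1 Hb2]]].
  destruct (choose_bij (fun a => {x | C a x}) (fun _ => nat) HC) as [fc [gc [Hc1 Hc2]]].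
  set (a' := fun w => proj1_sig (ga w)).
  set (b' := fun w => proj1_sig (gb w)).
  set (c' := fun w n => proj1_sig (gc w n)).
  assert (Aa : forall w, A (a' w)) by (intro; apply proj2_sig).
  assert (Bb : forall w, B (b' w)) by (intro; apply proj2_sig).
  assert (Cc : forall w n, C w (c' w n)) by (intros; apply proj2_sig).
  assert (ai : forall w w', a' w = a' w' -> w = w').
  { intros w w' E. apply proj_inj in E. rewrite <- (Ha2 w), <- (Ha2 w'), E. auto. }
  assert (bi : forall w w', b' w = b' w' -> w = w').
  { intros w w' E. apply proj_inj in E. rewrite <- (Hb2 w), <- (Hb2 w'), E. auto. }
  assert (ci : forall w n m, c' w n = c' w m -> n = m).
  { intros w n m E. apply proj_inj in E. rewrite <- (Hc2 w n), <- (Hc2 w m), E. auto. }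
  destruct (SB (fun s : W + W => match s with inl w => a' w | inr w => b' w end) inl)
    as [e [d [Hed Hde]]].
  { intros [x|x] [y|y] E.
    - f_equal; auto.
    - exfalso; apply (HAB (a' x)); [auto|rewrite E; auto].
    - exfalso; apply (HAB (a' y)); [auto|rewrite <- E; auto].
    - f_equal; auto. }
  { intros y y' E; congruence. }
  destruct (SB (fun p : W * nat => c' (fst p) (snd p)) (fun w => (w, 0)))
    as [k [k' [Hkk Hk'k]]].
  { intros [x n] [y m] E. simpl in E.
    assert (x = y) by (apply (HCC (c' x n)); [auto|rewrite E; auto]). subst. f_equal. eauto. }
  { intros y y' E; congruence. }
  set (pi := fun u : (W + W) + (W * nat) => match u with
        | inl (inl w) => a' w | inl (inr w) => b' w | inr (w, n) => c' w n end).
  assert (pinl : forall s, A (pi (inl s)) \/ B (pi (inl s))).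
  { intros [w|w]; simpl; auto. }
  destruct (inj_surj_bij pi) as [pinv [Hp1 Hp2]].
  { intros [[x|x]|[x n]] [[y|y]|[y m]] E; simpl in E;
      try (exfalso; eauto; fail); try (exfalso; apply (HAB (a' x)); [auto|rewrite E; auto]; fail);
      try (exfalso; apply (HAB (a' y)); [auto|rewrite <- E; auto]; fail);
      try (exfalso; apply (HAC (a' x) x0); [auto|rewrite E; auto]; fail).
    - f_equal; f_equal; auto.
    - exfalso; apply (HAC (a' x) y); [auto|rewrite E; auto].
    - f_equal; f_equal; auto.
    - exfalso; apply (HBC (b' x) y); [auto|rewrite E; auto].
    - exfalso; apply (HAC (a' y) x); [auto|rewrite <- E; auto].
    - exfalso; apply (HBC (b' y) x); [auto|rewrite <- E; auto].
    - assert (x = y) by (apply (HCC (c' x n)); [auto|rewrite E; auto]). subst. f_equal. f_equal. eauto. }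
  { intros y. destruct (Hcover y) as [H|[H|[a H]]].
    - exists (inl (inl (fa (exist _ y H)))). simpl. unfold a'. rewrite Ha1. auto.
    - exists (inl (inr (fb (exist _ y H)))). simpl. unfold b'. rewrite Hb1. auto.
    - exists (inr (a, fc a (exist _ y H))). simpl. unfold c'. rewrite Hc1. auto. }
  set (tau := fun u : (W + W) + (W * nat) => match u with
        | inl s => inl (inl (e s))
        | inr (w, n) => match d w with inl b => inr (b, n) | inr b => inl (inr (k (b, n))) end
        end : (W + W) + (W * nat)).
  destruct (inj_surj_bij tau) as [tinv [Ht1 Ht2]].
  { intros [s|[x n]] [t|[y m]]; simpl.
    - intros E. injection E as E. rewrite <- (Hed s), <- (Hed t), E. auto.
    - destruct (d y); discriminate.
    - destruct (d x); discriminate.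
    - destruct (d x) as [x1|x1] eqn:Ex; destruct (d y) as [y1|y1] eqn:Ey; intros E;
        try discriminate.
      + injection E as <- <-. rewrite <- (Hde x), <- (Hde y), Ex, Ey. auto.
      + injection E as E. apply (f_equal k') in E. rewrite !Hkk in E. injection E as <- <-.
        rewrite <- (Hde x), <- (Hde y), Ex, Ey. auto. }
  { intros [[g|g]|[g n]].
    - exists (inl (d g)). simpl. rewrite Hde. auto.
    - destruct (k' g) as [b n] eqn:Eg. exists (inr (e (inr b), n)). simpl. rewrite Hed.
      rewrite <- Eg, Hk'k. auto.
    - exists (inr (e (inl g), n)). simpl. rewrite Hed. auto. }
  assert (Hrel : forall u v, rho (pi u) (pi v) -> sigma (pi (tau u)) (pi (tau v))).
  { intros [s|[x n]] [t|[y m]] Hr; unfold rho in Hr.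
    - simpl. left. auto.
    - exfalso. destruct Hr as [[_ [H|H]]|[a [H1 H2]]].
      + simpl in H. eauto.
      + simpl in H. eauto.
      + destruct (pinl s); eauto.
    - exfalso. destruct Hr as [[[H|H] _]|[a [H1 H2]]].
      + simpl in H. eauto.
      + simpl in H. eauto.
      + destruct (pinl t); eauto.
    - destruct Hr as [[[H|H] _]|[a [H1 H2]]].
      + simpl in H. exfalso; eauto.
      + simpl in H. exfalso; eauto.
      + simpl in H1, H2. assert (a = x) by eauto. assert (a = y) by eauto. subst.
        simpl. destruct (d y) as [b|b]; simpl.
        * right; right. exists b. auto.
        * right; left. auto. }
  exists (fun x => pi (tau (pinv x))). split.
  - exists (fun y => pi (tinv (pinv y))). split; intros x.
    + rewrite !Hp1, Ht1, Hp2. auto.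
    + rewrite !Hp1, Ht2, Hp2. auto.
  - intros x y H. apply Hrel. rewrite !Hp2. auto.
Qed.
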